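(* Let $\mathcal{L}$ be differentiable and let (A4)–(A5) (see context) hold with some $q>1$. Fix $\theta\in\mathbb{R}^d$ and $p\in(0,1)$, let $\widetilde G(\theta)\sim\mathcal{D}_{\mathcal I}(\theta)$ be an uncorrupted gradient sample, $\tau_\theta=Q_p(\|\widetilde G(\theta)\|)$, $\alpha_\theta=\min(1,\tau_\theta/\|\widetilde G(\theta)\|)$ and $\overline\alpha_\theta=\mathbb{E}[\alpha_\theta\mid\theta]$. Then $$\big\|\mathbb{E}[\alpha_\theta\widetilde G(\theta)]-\overline\alpha_\theta\nabla\mathcal{L}(\theta)\big\|\le(1-p)^{1-1/q}\big(A_q\|\theta-\theta^\star\|+B_q\big),$$ $$\tau_\theta\le\|\nabla\mathcal{L}(\theta)\|+Q_p(\|\varepsilon_\theta\|)\le\|\nabla\mathcal{L}(\theta)\|+(1-p)^{-1/q}\big(A_q\|\theta-\theta^\star\|+B_q\big).$$ If moreover $q\ge2$, then $$\mathbb{E}\big\|\alpha_\theta\widetilde G(\theta)-\mathbb{E}[\alpha_\theta\widetilde G(\theta)]\big\|^2\le\big(A_q\|\theta-\theta^\star\|+B_q\big)^2+5(1-p)\tau_\theta^2.$$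
   Context: (A4) For all $\theta$, uncorrupted gradient samples satisfy $\widetilde G(\theta)=\nabla\mathcal{L}(\theta)+\varepsilon_\theta$, with $\mathbb{E}[\varepsilon_\theta\mid\theta]=0$ and $\varepsilon_\theta$ distributed as $\delta\nu_{\theta,1}+(1-\delta)\nu_{\theta,2}$, $\delta>0$, where $\nu_{\theta,1}$ has a Lebesgue density $h_\theta$ with $\inf_{\|\omega\|\le R}h_\theta(\omega)>\varkappa(R)>0$ for all $R>0$, $\varkappa$ independent of $\theta$. (A5) For all $\theta$: $\mathbb{E}[\|\varepsilon_\theta\|^q\mid\theta]^{1/q}\le A_q\|\theta-\theta^\star\|+B_q$ with $A_q,B_q>0$, where $\theta^\star\in\mathbb{R}^d$ is a fixed reference point (the minimizer of $\mathcal{L}$). $Q_p(X)$ denotes the $p$-quantile of a real random variable $X$. All expectations are conditional on the fixed $\theta$. *)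

(* Defs.v *)
From HB Require Import structures.
From mathcomp Require Import all_boot all_order all_algebra.
From mathcomp Require Import all_classical all_reals all_analysis.
Set Implicit Arguments. Unset Strict Implicit. Unset Printing Implicit Defensive.
Import Order.TTheory GRing.Theory Num.Theory.
Import numFieldNormedType.Exports.
Local Open Scope classical_set_scope.
Local Open Scope ring_scope.

Definition enorm {R : realType} {d : nat} (v : 'rV[R]_d) : R :=
  Num.sqrt (\sum_(i < d) v ord0 i ^+ 2).

(* Conversions between row vectors and tuples (tuples carry the product
   sigma-algebra in MathComp-Analysis). *)
Definition rv2tup {R : realType} {d : nat} (v : 'rV[R]_d) : d.-tuple R :=
  [tuple v ord0 i | i < d].
Definition tup2rv {R : realType} {d : nat} (t : d.-tuple R) : 'rV[R]_d :=
  \row_(i < d) tnth t i.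

(* Iterated Lebesgue integral over R^n (n.-tuples): the Lebesgue integral on
   R^n of a nonnegative measurable function, computed by Tonelli as iterated
   one-dimensional Lebesgue integrals. *)
Fixpoint lebI {R : realType} (n : nat) : (n.-tuple R -> \bar R) -> \bar R :=
  match n with
  | 0 => fun f => f [tuple]
  | n'.+1 => fun f =>
      (\int[@lebesgue_measure R]_x lebI (fun t : n'.-tuple R => f [tuple of x :: t]))%E
  end.

Definition grad {R : realType} {d : nat} (L : 'rV[R]_d -> R) (theta : 'rV[R]_d)
  : 'rV[R]_d := \row_(i < d) ('d L theta (delta_mx ord0 i : 'rV[R]_d)).

Definition vexpect {dT} {T : measurableType dT} {R : realType}
  (P : probability T R) {d : nat} (X : T -> 'rV[R]_d) : 'rV[R]_d :=
  \row_(i < d) fine (\int[P]_w (X w ord0 i)%:E)%E.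

Definition quantile {dT} {T : measurableType dT} {R : realType}
  (P : probability T R) (X : T -> R) (p : R) : R :=
  inf [set t : R | (p%:E <= P [set w | (X w <= t)%R])%E].

(* Clipping factor alpha = min(1, tau/||G||), with the convention alpha = 1
   when ||G|| <= tau (in particular when G = 0). *)
Definition clipfac {R : realType} (tau x : R) : R :=
  if x <= tau then 1 else tau / x.

(* Main.v *)
Require Import Defs.
From HB Require Import structures.
From mathcomp Require Import all_boot all_order all_algebra.
From mathcomp Require Import all_classical all_reals all_analysis.
From mathcomp Require Import measurable_realfun.
From mathcomp Require Import ring lra.
Import Order.TTheory GRing.Theory Num.Theory.
Import numFieldNormedType.Exports.
Local Open Scope classical_set_scope.
Local Open Scope ring_scope.

Definition sqn {R : realType} {d : nat} (v : 'rV[R]_d) := \sum_(i < d) v ord0 i ^+ 2.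
Definition dotv {R : realType} {d : nat} (u v : 'rV[R]_d) :=
  \sum_(i < d) u ord0 i * v ord0 i.

Lemma sqn_ge0 (R : realType) d (v : 'rV[R]_d) : 0 <= sqn v.
Proof. by apply: sumr_ge0 => i _; apply: sqr_ge0. Qed.

Lemma enorm_ge0 (R : realType) d (v : 'rV[R]_d) : 0 <= enorm v.
Proof. exact: sqrtr_ge0. Qed.

Lemma enorm_sq (R : realType) d (v : 'rV[R]_d) : enorm v ^+ 2 = sqn v.
Proof. by rewrite /enorm sqr_sqrtr // sqn_ge0. Qed.

Lemma sq_le_sq (R : realType) (x y : R) : 0 <= y -> x ^+ 2 <= y ^+ 2 -> x <= y.
Proof.
move=> y0 h; have [x0|x0] := lerP x 0; first exact: le_trans x0 y0.
by rewrite -(@ler_pXn2r _ 2 isT) // ?nnegrE ?(ltW x0).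
Qed.

Lemma CS (R : realType) d (u v : 'rV[R]_d) : dotv u v <= enorm u * enorm v.
Proof.
set S := dotv u v.
apply: sq_le_sq; first by rewrite mulr_ge0 // enorm_ge0.
rewrite exprMn !enorm_sq.
have [A0|A0] := eqVneq (sqn u) 0.
  have ui : forall i, u ord0 i = 0.
    move=> i; apply/eqP; rewrite -sqrf_eq0; apply/eqP.
    by apply: (psumr_eq0P _ A0) => // j _; apply: sqr_ge0.
  rewrite A0 mul0r /S /dotv big1 ?expr0n // => i _; by rewrite ui mul0r.
have Apos : 0 < sqn u by rewrite lt0r A0 sqn_ge0.
have key : 0 <= \sum_(i < d) (S * u ord0 i - sqn u * v ord0 i) ^+ 2.
  by apply: sumr_ge0 => i _; apply: sqr_ge0.
have E0 : forall a s : R, \sum_(i < d) (s * u ord0 i - a * v ord0 i) ^+ 2 =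
   s ^+ 2 * sqn u - 2 * s * a * dotv u v + a ^+ 2 * sqn v.
  move=> a s; rewrite /sqn /dotv !mulr_sumr -sumrB -big_split /=.
  by apply: eq_bigr => i _; ring.
have E := E0 (sqn u) S.
rewrite E in key.
have : 0 <= sqn u * (sqn u * sqn v - S ^+ 2) by rewrite [X in _ <= X](_ : _ = S ^+ 2 * sqn u - 2 * S * sqn u * S + sqn u ^+ 2 * sqn v) //; ring.
by rewrite pmulr_rge0 // subr_ge0.
Qed.

Lemma clipfac_ge0 (R : realType) (t r : R) : 0 <= t -> 0 <= r -> 0 <= clipfac t r.
Proof. by move=> t0 r0; rewrite /clipfac; case: ifP => // _; rewrite divr_ge0. Qed.

Lemma clipfac_le1 (R : realType) (t r : R) : 0 <= t -> 0 <= r -> clipfac t r <= 1.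
Proof.
move=> t0 r0; rewrite /clipfac; case: ifP => // /negbT; rewrite -ltNge => tr.
by rewrite ler_pdivrMr ?mul1r ?ltW // (le_lt_trans t0).
Qed.

Lemma clipfac_mul (R : realType) (t r : R) : 0 <= t -> 0 <= r -> clipfac t r * r <= t.
Proof.
move=> t0 r0; rewrite /clipfac; case: ifP => [|/negbT]; first by rewrite mul1r.
by rewrite -ltNge => tr; rewrite divfK // gt_eqF // (le_lt_trans t0).
Qed.

Lemma clip_scalar (R : realType) (t xn yn : R) : 0 <= t -> 0 <= xn -> 0 <= yn ->
  0 <= (1 - clipfac t xn ^+ 2) * xn ^+ 2 + (1 - clipfac t yn ^+ 2) * yn ^+ 2
        - 2 * (1 - clipfac t xn * clipfac t yn) * (xn * yn).
Proof.
move=> t0 x0 y0; set a := clipfac t xn; set b := clipfac t yn.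
have -> : (1 - a ^+ 2) * xn ^+ 2 + (1 - b ^+ 2) * yn ^+ 2 - 2 * (1 - a * b) * (xn * yn)
  = xn ^+ 2 - (a * xn) ^+ 2 + yn ^+ 2 - (b * yn) ^+ 2 - 2 * xn * yn + 2 * (a * xn) * (b * yn)
  by ring.
rewrite /a /b /clipfac.
case: ifP => hx; case: ifP => hy; rewrite ?mul1r.
- have -> : forall z : R, z ^+ 2 - z ^+ 2 = 0 by move=> z; rewrite subrr.
  by rewrite (_ : _ + _ = 0) //; ring.
- move/negbT: hy; rewrite -ltNge => hy.
  rewrite divfK ?gt_eqF ?(le_lt_trans t0) //.
  have h1 : 0 <= yn - t by lra.
  have h2 : 0 <= yn + t - 2 * xn by lra.
  have := mulr_ge0 h1 h2; nra.
- move/negbT: hx; rewrite -ltNge => hx.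
  rewrite divfK ?gt_eqF ?(le_lt_trans t0) //.
  have h1 : 0 <= xn - t by lra.
  have h2 : 0 <= xn + t - 2 * yn by lra.
  have := mulr_ge0 h1 h2; nra.
- move/negbT: hx; rewrite -ltNge => hx.
  move/negbT: hy; rewrite -ltNge => hy.
  rewrite !divfK ?gt_eqF ?(le_lt_trans t0) //.
  have := sqr_ge0 (xn - yn); nra.
Qed.

Lemma sqn_opp (R : realType) d (v : 'rV[R]_d) : sqn (- v) = sqn v.
Proof. by apply: eq_bigr => i _; rewrite !mxE sqrrN. Qed.

Lemma enorm_opp (R : realType) d (v : 'rV[R]_d) : enorm (- v) = enorm v.
Proof. by rewrite /enorm -/(sqn _) sqn_opp. Qed.

Lemma enormZ (R : realType) d (a : R) (v : 'rV[R]_d) : 0 <= a ->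
  enorm (a *: v) = a * enorm v.
Proof.
move=> a0; rewrite /enorm.
rewrite (eq_bigr (fun i => a ^+ 2 * v ord0 i ^+ 2)); last by move=> i _; rewrite !mxE exprMn.
by rewrite -mulr_sumr sqrtrM ?sqr_ge0 // sqrtr_sqr ger0_norm.
Qed.

Lemma sqnD (R : realType) d (u v : 'rV[R]_d) :
  sqn (u + v) = sqn u + 2 * dotv u v + sqn v.
Proof.
rewrite /sqn /dotv mulr_sumr -!big_split /=.
by apply: eq_bigr => i _; rewrite !mxE; ring.
Qed.

Lemma enorm_triangle (R : realType) d (u v : 'rV[R]_d) :
  enorm (u + v) <= enorm u + enorm v.
Proof.
apply: sq_le_sq; first by rewrite addr_ge0 // enorm_ge0.
rewrite enorm_sq sqnD sqrrD !enorm_sq.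
have := @CS _ _ u v; lra.
Qed.

Lemma coord_le_enorm (R : realType) d (v : 'rV[R]_d) i : `|v ord0 i| <= enorm v.
Proof.
apply: sq_le_sq; first exact: enorm_ge0.
rewrite enorm_sq real_normK ?num_real // /sqn (bigD1 i) //= lerDl.
by apply: sumr_ge0 => j _; apply: sqr_ge0.
Qed.

Lemma clip_enorm (R : realType) d (t : R) (x : 'rV[R]_d) : 0 <= t ->
  enorm (clipfac t (enorm x) *: x) <= t.
Proof.
move=> t0; rewrite enormZ ?clipfac_ge0 ?enorm_ge0 //.
by apply: clipfac_mul => //; exact: enorm_ge0.
Qed.

Lemma clip_lip (R : realType) d (t : R) (x y : 'rV[R]_d) : 0 <= t ->
  sqn (clipfac t (enorm x) *: x - clipfac t (enorm y) *: y) <= sqn (x - y).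
Proof.
move=> t0.
set a := clipfac t (enorm x); set b := clipfac t (enorm y).
have E : sqn (x - y) - sqn (a *: x - b *: y) =
  (1 - a ^+ 2) * sqn x + (1 - b ^+ 2) * sqn y - 2 * (1 - a * b) * dotv x y.
  rewrite /sqn /dotv !mulr_sumr -big_split /= -!sumrB.
  by apply: eq_bigr => i _; rewrite !mxE; ring.
rewrite -subr_ge0 E -!enorm_sq.
have h := @clip_scalar _ t _ _ t0 (enorm_ge0 _ _ x) (enorm_ge0 _ _ y).
rewrite -/a -/b in h.
have hab : 0 <= 1 - a * b.
  rewrite subr_ge0 /a /b; apply: mulr_ile1;
  by rewrite ?clipfac_ge0 ?clipfac_le1 ?enorm_ge0.
have := ler_wpM2l hab (@CS _ _ x y).
lra.
Qed.

Lemma meas_enorm (dT : measure_display) (T : measurableType dT) (R : realType) d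
  (X : T -> 'rV[R]_d) :
  (forall i, measurable_fun setT (fun w => X w ord0 i)) ->
  measurable_fun setT (fun w => enorm (X w)).
Proof.
move=> mX; rewrite /enorm.
apply: (measurableT_comp (continuous_measurable_fun (@sqrt_continuous R))).
apply: measurable_sum => i.
exact: measurable_funX.
Qed.

Lemma bdd_integrable (dT : measure_display) (T : measurableType dT) (R : realType)
  (P : probability T R) (f : T -> R) (c : R) :
  measurable_fun setT f -> (forall w, `|f w| <= c) ->
  P.-integrable setT (EFin \o f).
Proof.
move=> mf hc.
apply: (@le_integrable _ _ _ P setT measurableT _ (EFin \o cst c)) => //.
- exact/measurable_EFinP.
- move=> w _ /=; rewrite lee_fin (le_trans (hc w)) //.
  exact: ler_norm.
- exact: finite_measure_integrable_cst.
Qed.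

Lemma Rintegral_sumI (dT : measure_display) (T : measurableType dT) (R : realType)
  (P : probability T R) d (f : 'I_d -> T -> R) :
  (forall i, P.-integrable setT (EFin \o f i)) ->
  Rintegral P setT (fun w => \sum_(i < d) f i w) =
  \sum_(i < d) Rintegral P setT (f i).
Proof.
move=> hf; rewrite /Rintegral.
under eq_integral do rewrite -sumEFin.
rewrite integral_sum //.
rewrite (eq_bigr (fun i => (fine (\int[P]_(x in setT) (f i x)%:E))%:E)); last first.
  by move=> i _; rewrite fineK //; apply: integrable_fin_num => //; exact: (hf i).
by rewrite sumEFin.
Qed.

Lemma meas_le (dT : measure_display) (T : measurableType dT) (R : realType)
  (X : T -> R) (c : R) : measurable_fun setT X -> measurable [set w | X w <= c].
Proof.
move=> mX; have := mX measurableT _ (measurable_itv `]-oo, c]).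
rewrite setTI; congr measurable; apply/seteqP; split => w /=; by rewrite in_itv.
Qed.

Lemma meas_lt (dT : measure_display) (T : measurableType dT) (R : realType)
  (X : T -> R) (c : R) : measurable_fun setT X -> measurable [set w | c < X w].
Proof.
move=> mX; have := mX measurableT _ (measurable_itv `]c, +oo[).
rewrite setTI; congr measurable; apply/seteqP; split => w /=; by rewrite in_itv /= andbT.
Qed.

Lemma markov0 (dT : measure_display) (T : measurableType dT) (R : realType)
  (P : probability T R) (h : T -> R) (B : set T) (c : R) :
  0 <= c -> measurable B -> measurable_fun setT h -> (forall w, 0 <= h w) ->
  (forall w, B w -> c <= h w) ->
  (c%:E * P B <= \int[P]_w (h w)%:E)%E.
Proof.
move=> c0 mB mh h0 hB.
have -> : P B = P (B `&` setT) by rewrite setIT.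
rewrite -integral_indic // -ge0_integralZl_EFin //.
apply: ge0_le_integral => //.
- by move=> w _; rewrite -EFinM lee_fin mulr_ge0.
- apply: measurable_funeM; apply/measurable_EFinP.
  exact: measurable_indic.
- exact/measurable_EFinP.
- move=> w _; rewrite -EFinM lee_fin indicE.
  case: (boolP (w \in B)) => [hw|hw]; rewrite /= ?mulr1 ?mulr0 //.
  by apply: hB; apply: set_mem.
by apply/measurable_EFinP; exact: measurable_indic.
Qed.

Lemma qset_ge0 (dT : measure_display) (T : measurableType dT) (R : realType)
  (P : probability T R) (X : T -> R) (p t : R) :
  0 < p -> (forall w, 0 <= X w) -> (p%:E <= P [set w | (X w <= t)%R])%E -> 0 <= t.
Proof.
move=> p0 X0 h; rewrite leNgt; apply/negP => t0.
have E : [set w | X w <= t] = set0.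
  apply/seteqP; split => w //= hw; have := X0 w; lra.
by move: h; rewrite E measure0 lee_fin leNgt p0.
Qed.

Lemma quantile_le (dT : measure_display) (T : measurableType dT) (R : realType)
  (P : probability T R) (X : T -> R) (p t : R) :
  0 < p -> (forall w, 0 <= X w) -> (p%:E <= P [set w | (X w <= t)%R])%E ->
  quantile P X p <= t.
Proof.
move=> p0 X0 h; rewrite /quantile; apply: ge_inf => //.
by exists 0 => s /= hs; apply: qset_ge0 hs.
Qed.

Lemma quantile_ge0 (dT : measure_display) (T : measurableType dT) (R : realType)
  (P : probability T R) (X : T -> R) (p t : R) :
  0 < p -> (forall w, 0 <= X w) -> (p%:E <= P [set w | (X w <= t)%R])%E ->
  0 <= quantile P X p.
Proof.
move=> p0 X0 h; rewrite /quantile; apply: lb_le_inf; first by exists t.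
by move=> s /= hs; apply: qset_ge0 hs.
Qed.

Lemma quantile_attained (dT : measure_display) (T : measurableType dT) (R : realType)
  (P : probability T R) (X : T -> R) (p t : R) :
  measurable_fun setT X ->
  0 < p -> (forall w, 0 <= X w) -> (p%:E <= P [set w | (X w <= t)%R])%E ->
  (p%:E <= P [set w | (X w <= quantile P X p)%R])%E.
Proof.
move=> mX p0 X0 ht.
set tau := quantile P X p.
pose F n := [set w | X w <= tau + n.+1%:R^-1].
have mF n : measurable (F n) by apply: meas_le.
have capF : \bigcap_n F n = [set w | X w <= tau].
  apply/seteqP; split => w /=.
    move=> h; rewrite leNgt; apply/negP => /ltr_add_invr [k hk].
    by have := h k I; rewrite /F /= => hk2; have := lt_le_trans hk hk2; rewrite ltxx.
  move=> h n _; rewrite /F /= (le_trans h) // lerDl invr_ge0 ler0n //.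
have ndF : {homo F : n m / (n <= m)%N >-> (m <= n)%O}.
  move=> n m nm; apply/subsetPset => w; rewrite /F /= => h.
  rewrite (le_trans h) // lerD2l lef_pV2 ?posrE ?ltr0n // ler_nat.
  by rewrite ltnS.
have mcap : measurable (\bigcap_n F n) by rewrite capF; apply: meas_le.
have cv := nonincreasing_cvg_mu (mu := P) (F := F)
  (le_lt_trans (probability_le1 P (mF 0%N)) (ltry 1)) mF
  mcap ndF.
rewrite -capF -(cvg_lim _ cv) //; apply: lime_ge; first by apply/cvg_ex; eexists; exact: cv.
apply: nearW => n /=.
have [s hs slt] : exists2 s, (p%:E <= P [set w | (X w <= s)%R])%E & s < tau + n.+1%:R^-1.
  apply: inf_lt; first by exists t.
  by rewrite ltrDl invr_gt0 ltr0n.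
rewrite (le_trans hs) // le_measure ?inE //; first exact: meas_le.
by move=> w /= h; rewrite /F /= (le_trans h) // ltW.
Qed.

Lemma pow_inv_le (R : realType) (I : \bar R) (r M : R) : 0 < r -> 0 <= M ->
  (0 <= I)%E -> (I `^ r^-1 <= M%:E)%E -> (I <= (M `^ r)%:E)%E.
Proof.
move=> r0 M0; case: I => [x| |] //.
- rewrite lee_fin poweR_EFin lee_fin => x0 h.
  have -> : x = (x `^ r^-1) `^ r by rewrite -powRrM mulVf ?gt_eqF // powRr1.
  by apply: ge0_ler_powR => //; rewrite ?ltW // nnegrE powR_ge0.
- by rewrite poweRyr ?invr_neq0 ?gt_eqF // leNgt ltey.
Qed.

Lemma dom_integrable (dT : measure_display) (T : measurableType dT) (R : realType)
  (P : probability T R) (f h : T -> R) :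
  measurable_fun setT f -> (forall w, `|f w| <= `|h w|) ->
  P.-integrable setT (EFin \o h) -> P.-integrable setT (EFin \o f).
Proof.
move=> mf hf ih; apply: (@le_integrable _ _ _ P setT measurableT _ (EFin \o h)) => //.
- exact/measurable_EFinP.
- by move=> w _ /=; rewrite lee_fin.
Qed.

Lemma compl_le (dT : measure_display) (T : measurableType dT) (R : realType)
  (P : probability T R) (A : set T) (p : R) :
  measurable A -> (p%:E <= P A)%E -> (P (~` A) <= (1 - p)%:E)%E.
Proof.
move=> mA h; rewrite probability_setC //.
have fA : P A = (fine (P A))%:E by rewrite fineK // fin_num_measure.
rewrite fA -EFinB lee_fin; move: h; rewrite fA lee_fin; lra.
Qed.

Lemma intD (dT : measure_display) (T : measurableType dT) (R : realType)
  (P : probability T R) (f1 f2 : T -> R) :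
  P.-integrable setT (EFin \o f1) -> P.-integrable setT (EFin \o f2) ->
  P.-integrable setT (EFin \o (fun w => f1 w + f2 w)).
Proof.
move=> h1 h2; have := integrableD measurableT h1 h2.
by apply: eq_integrable => // w _ /=; rewrite EFinD.
Qed.

Lemma intB (dT : measure_display) (T : measurableType dT) (R : realType)
  (P : probability T R) (f1 f2 : T -> R) :
  P.-integrable setT (EFin \o f1) -> P.-integrable setT (EFin \o f2) ->
  P.-integrable setT (EFin \o (fun w => f1 w - f2 w)).
Proof.
move=> h1 h2; have := integrableB measurableT h1 h2.
by apply: eq_integrable => // w _ /=; rewrite EFinB.
Qed.

Lemma intZ (dT : measure_display) (T : measurableType dT) (R : realType)
  (P : probability T R) (f : T -> R) (k : R) :
  P.-integrable setT (EFin \o f) ->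
  P.-integrable setT (EFin \o (fun w => k * f w)).
Proof.
move=> h; have := integrableZl measurableT k h.
by apply: eq_integrable => // w _ /=; rewrite EFinM.
Qed.

Lemma intC (dT : measure_display) (T : measurableType dT) (R : realType)
  (P : probability T R) (k : R) :
  P.-integrable setT (EFin \o (fun w : T => k)).
Proof. exact: finite_measure_integrable_cst. Qed.

Lemma Rint_cst (dT : measure_display) (T : measurableType dT) (R : realType)
  (P : probability T R) (k : R) : Rintegral P setT (fun _ => k) = k.
Proof.
rewrite Rintegral_cst //.
have h : fine (P setT) = 1 by rewrite probability_setT.
by rewrite h mulr1.
Qed.

Lemma var_le (dT : measure_display) (T : measurableType dT) (R : realType)
  (P : probability T R) (f : T -> R) (K c : R) :
  measurable_fun setT f -> (forall w, `|f w| <= K) ->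
  Rintegral P setT (fun w => (f w - Rintegral P setT f) ^+ 2)
  <= Rintegral P setT (fun w => (f w - c) ^+ 2).
Proof.
move=> mf fK; set m := Rintegral P setT f.
have K0 : forall w : T, 0 <= K by move=> w; exact: (le_trans (normr_ge0 (f w)) (fK w)).
have bdd : forall (a : R) (k : nat), P.-integrable setT (EFin \o (fun w => (f w - a) ^+ k)).
  move=> a k; apply: (@bdd_integrable _ _ _ P _ ((K + `|a|) ^+ k)).
    by apply: measurable_funX; apply: measurable_funB => //; exact: measurable_cst.
  move=> w; rewrite normrX; apply: lerXn2r.
  - by rewrite nnegrE.
  - by rewrite nnegrE addr_ge0 // (K0 w).
  - by rewrite (le_trans (ler_normB _ _)) // lerD2r.
have E : Rintegral P setT (fun w => (f w - c) ^+ 2) =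
   Rintegral P setT (fun w => (f w - m) ^+ 2) + (m - c) ^+ 2.
  have -> : (fun w => (f w - c) ^+ 2) = (fun w => (f w - m) ^+ 2 +
      (2 * (m - c) * (f w - m) ^+ 1 + (m - c) ^+ 2)).
    by apply: funext => w; ring.
  have i1 := bdd m 1%N.
  rewrite RintegralD //; last by apply: intD; [apply: intZ | apply: intC].
  rewrite RintegralD //; [|by apply: intZ|by apply: intC].
  rewrite RintegralZl //.
  have -> : Rintegral P setT (fun w => (f w - m) ^+ 1) = 0.
    rewrite (@eq_Rintegral _ _ _ P setT (fun w => f w - m)); last by move=> w _; rewrite expr1.
    have i0 : P.-integrable setT (EFin \o f).
      by have := bdd 0 1%N; apply: eq_integrable => // w _ /=; rewrite subr0 expr1.
    rewrite RintegralB //; last exact: intC.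
    by rewrite Rint_cst subrr.
  by rewrite Rint_cst mulr0 add0r.
rewrite E lerDl; exact: sqr_ge0.
Qed.

Lemma sq_moment (dT : measure_display) (T : measurableType dT) (R : realType)
  (P : probability T R) (ne : T -> R) (q M : R) :
  measurable_fun setT ne -> (forall w, 0 <= ne w) -> 2 <= q -> 0 <= M ->
  ((\int[P]_w ((ne w) `^ q)%:E) `^ q^-1 <= M%:E)%E ->
  (\int[P]_w ((ne w) ^+ 2)%:E <= (M ^+ 2)%:E)%E.
Proof.
move=> mne ne0 q2 M0 hA.
have q0 : 0 < q by lra.
set I := (\int[P]_w ((ne w) `^ q)%:E)%E.
have I0 : (0 <= I)%E by apply: integral_ge0 => w _; rewrite lee_fin powR_ge0.
have hI : (I <= (M `^ q)%:E)%E by apply: pow_inv_le.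
have Ifin : I = (fine I)%:E.
  rewrite fineK // ge0_fin_numE //; exact: le_lt_trans hI (ltry _).
have [q2e|q2l] := eqVneq q 2.
  rewrite -(powR_mulrn 2 M0).
  suff -> : (\int[P]_w ((ne w) ^+ 2)%:E)%E = I by rewrite -q2e.
  by apply: eq_integral => w _; rewrite q2e (powR_mulrn 2 (ne0 w)).
have q2s : 2 < q by rewrite lt_neqAle eq_sym q2l q2.
pose s' := (1 - 2 / q)^-1.
have hs'1 : 0 < 1 - 2 / q by rewrite subr_gt0 ltr_pdivrMr // mul1r.
have s'0 : 0 < s' by rewrite invr_gt0.
have h2 : 0 < q / 2 by rewrite divr_gt0.
have conj : (q / 2)^-1 + s'^-1 = 1 by rewrite invrK invf_div; ring.
have mf2 : measurable_fun setT (fun w => ne w ^+ 2) by exact: measurable_funX.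
have := hoelder P mf2 (measurable_cst (1 : R)) h2 s'0 conj.
rewrite Lnorm1.
have -> : (\int[P]_x `|(EFin \o (fun w => ne w ^+ 2 * (cst 1 : T -> R) w)%R) x|)%E
   = (\int[P]_w ((ne w) ^+ 2)%:E)%E.
  by apply: eq_integral => w _ /=; rewrite mulr1 ger0_norm ?sqr_ge0.
rewrite (_ : EFin \o cst 1%R = cst 1%E); last by apply: funext.
rewrite Lnorm_cst1.
rewrite [X in (X `^ _)%E](_ : _ = 1%E); last exact: probability_setT.
rewrite poweR1r mule1.
have -> : ('N[P]_(q / 2)%:E[EFin \o (fun w : T => (ne w ^+ 2)%R)])%E = (I `^ (2 / q))%E.
  rewrite unlock /=; rewrite invf_div; congr (_ `^ _)%E.
  apply: eq_integral => w _ /=; rewrite ger0_norm ?sqr_ge0 //.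
  by rewrite -(powR_mulrn 2 (ne0 w)) -powRrM mulrC divfK.
rewrite Ifin poweR_EFin => h; apply: (le_trans h); rewrite lee_fin.
move: hI; rewrite Ifin lee_fin => hI.
rewrite -(powR_mulrn 2 M0).
have -> : M `^ 2%:R = (M `^ q) `^ (2 / q) by rewrite -powRrM mulrC divfK ?gt_eqF.
apply: ge0_ler_powR => //.
- by rewrite divr_ge0 // ltW.
- by rewrite nnegrE /= fine_ge0.
- by rewrite nnegrE powR_ge0.
Qed.

Lemma holder_B (dT : measure_display) (T : measurableType dT) (R : realType)
  (P : probability T R) (ne : T -> R) (B : set T) (q p M : R) :
  measurable_fun setT ne -> (forall w, 0 <= ne w) -> measurable B ->
  1 < q -> 0 < p < 1 -> 0 <= M -> (P B <= (1 - p)%:E)%E ->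
  ((\int[P]_w ((ne w) `^ q)%:E) `^ q^-1 <= M%:E)%E ->
  P.-integrable setT (EFin \o (fun w => \1_B w * ne w)) /\
  (\int[P]_w (\1_B w * ne w)%:E <= ((1 - p) `^ (1 - q^-1) * M)%:E)%E.
Proof.
move=> mne ne0 mB q1 /andP[p0 p1] M0 hPB hA.
have q0 : 0 < q by lra.
have qi1 : 0 < 1 - q^-1 by rewrite subr_gt0 invf_lt1.
pose r := (1 - q^-1)^-1.
have r0 : 0 < r by rewrite invr_gt0.
have conj : r^-1 + q^-1 = 1 by rewrite invrK; ring.
have mi : measurable_fun setT (\1_B : T -> R) by exact: measurable_indic.
have := hoelder P mi mne r0 q0 conj.
rewrite Lnorm1.
have hN2 : ('N[P]_q%:E[EFin \o ne])%E = ((\int[P]_w ((ne w) `^ q)%:E) `^ q^-1)%E.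
  rewrite unlock /=; congr (_ `^ _)%E.
  by apply: eq_integral => w _ /=; rewrite ger0_norm.
have hN1 : ('N[P]_r%:E[EFin \o (\1_B : T -> R)])%E = (P B `^ r^-1)%E.
  rewrite unlock /=; congr (_ `^ _)%E.
  have -> : P B = P (B `&` setT) by rewrite setIT.
  rewrite -integral_indic //.
  apply: eq_integral => w _ /=; rewrite indicE.
  by case: (w \in B); rewrite /= ?normr1 ?normr0 ?powR1 ?powR0 ?gt_eqF.
rewrite hN1 hN2.
have PBf : P B = (fine (P B))%:E by rewrite fineK // fin_num_measure.
have h1 : (P B `^ r^-1 <= ((1 - p) `^ (1 - q^-1))%:E)%E.
  rewrite PBf poweR_EFin lee_fin invrK; apply: ge0_ler_powR => //.
  - exact: ltW.
  - by rewrite nnegrE fine_ge0.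
  - by rewrite nnegrE; lra.
  - by move: hPB; rewrite PBf lee_fin.
move=> hH.
have hle : (\int[P]_x `|(EFin \o (\1_B \* ne)%R) x| <= ((1 - p) `^ (1 - q^-1) * M)%:E)%E.
  apply: (le_trans hH); rewrite EFinM; apply: lee_pmul => //.
  - exact: poweR_ge0.
  - exact: poweR_ge0.
have int : P.-integrable setT (EFin \o (fun w => \1_B w * ne w)).
  apply/integrableP; split.
    by apply/measurable_EFinP; exact: measurable_funM.
  exact: le_lt_trans hle (ltry _).
split => //; apply: le_trans hle; rewrite le_eqVlt; apply/orP; left; apply/eqP.
apply: eq_integral => w _ /=; rewrite ger0_norm // mulr_ge0 //.
Qed.

Lemma int_sum (dT : measure_display) (T : measurableType dT) (R : realType)
  (P : probability T R) d (f : 'I_d -> T -> R) :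
  (forall i, P.-integrable setT (EFin \o f i)) ->
  P.-integrable setT (EFin \o (fun w => \sum_(i < d) f i w)).
Proof.
move=> hf.
have := @integrable_sum _ _ _ P setT measurableT _ (index_enum 'I_d) predT
  (fun i w => (f i w)%:E) (fun i _ => hf i).
by apply: eq_integrable => // w _ /=; rewrite sumEFin.
Qed.

Lemma mxBE (R : realType) d (a b : 'rV[R]_d) i : (a - b) ord0 i = a ord0 i - b ord0 i.
Proof. by rewrite !mxE. Qed.

Theorem lemma2 (R : realType) (d : nat) (L : 'rV[R]_d -> R)
  (theta thetastar : 'rV[R]_d)
  (dT : measure_display) (T : measurableType dT) (P : probability T R)
  (eps : T -> 'rV[R]_d) (q p Aq Bq : R) :
  (forall x, differentiable L x) ->
  (forall x, L thetastar <= L x) ->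
  1 < q -> 0 < p < 1 -> 0 < Aq -> 0 < Bq ->
  (forall i, measurable_fun setT (fun w => eps w ord0 i)) ->
  (forall i, P.-integrable setT (fun w => (eps w ord0 i)%:E) /\
             (\int[P]_w (eps w ord0 i)%:E = 0)%E) ->
  (exists (delta : R) (h : 'rV[R]_d -> R)
          (nu2 : probability (d.-tuple R) R),
     [/\ 0 < delta <= 1,
         (forall x, 0 <= h x) /\
         measurable_fun setT (fun t : d.-tuple R => h (tup2rv t)),
         (lebI (fun t : d.-tuple R => (h (tup2rv t))%:E) = 1)%E,
         (forall Rad : R, 0 < Rad -> exists kappa : R, 0 < kappa /\
             forall w : 'rV[R]_d, enorm w <= Rad -> kappa < h w) &
         (forall A : set (d.-tuple R), measurable A ->
            P [set w | A (rv2tup (eps w))] =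
            (delta%:E * lebI (fun t => (\1_A t * h (tup2rv t))%:E)
             + (1 - delta)%:E * nu2 A)%E)]) ->
  ((\int[P]_w ((enorm (eps w)) `^ q)%:E) `^ q^-1
     <= (Aq * enorm (theta - thetastar) + Bq)%:E)%E ->
  let g := grad L theta in
  let G := fun w => g + eps w in
  let tau := quantile P (fun w => enorm (G w)) p in
  let alpha := fun w => clipfac tau (enorm (G w)) in
  let alphabar := fine (\int[P]_w (alpha w)%:E)%E in
  let M := Aq * enorm (theta - thetastar) + Bq in
  [/\ enorm (vexpect P (fun w => alpha w *: G w) - alphabar *: g)
        <= (1 - p) `^ (1 - q^-1) * M,
      tau <= enorm g + quantile P (fun w => enorm (eps w)) p,
      enorm g + quantile P (fun w => enorm (eps w)) p
        <= enorm g + (1 - p) `^ (- q^-1) * M &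
      (2 <= q ->
       (\int[P]_w ((enorm (alpha w *: G w
                       - vexpect P (fun w => alpha w *: G w))) ^+ 2)%:E
          <= (M ^+ 2 + 5 * (1 - p) * tau ^+ 2)%:E)%E)].
Proof.
move=> _ _ q1 /andP[p0 p1] Aq0 Bq0 me ie _ A5 g G tau alpha alphabar M.
clearbody g.
have q0 : 0 < q by lra.
have hAq : 0 <= Aq * enorm (theta - thetastar) by apply: mulr_ge0; [exact: ltW | exact: enorm_ge0].
have M0 : 0 < M by rewrite /M; lra.
have mGi : forall i, measurable_fun setT (fun w => G w ord0 i).
  move=> i; have -> : (fun w => G w ord0 i) = (fun w => g ord0 i + eps w ord0 i).
    by apply: funext => w; rewrite /G mxE.
  by apply: measurable_funD => //; exact: measurable_cst.
have mne : measurable_fun setT (fun w => enorm (eps w)) by exact: meas_enorm.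
have mnG : measurable_fun setT (fun w => enorm (G w)) by exact: meas_enorm.
have ne0 : forall w, 0 <= enorm (eps w) by move=> w; exact: enorm_ge0.
have nG0 : forall w, 0 <= enorm (G w) by move=> w; exact: enorm_ge0.
have tri : forall w, enorm (G w) <= enorm g + enorm (eps w).
  by move=> w; exact: enorm_triangle.
set t0 := (1 - p) `^ (- q^-1) * M.
have t00 : 0 <= t0 by rewrite mulr_ge0 ?powR_ge0 ?ltW.
have Pt0 : (p%:E <= P [set w | (enorm (eps w) <= t0)%R])%E.
  set Bt := [set w | t0 < enorm (eps w)].
  have mBt : measurable Bt by exact: meas_lt.
  have hB : forall w, Bt w -> t0 `^ q <= enorm (eps w) `^ q.
    move=> w /= h; apply: ge0_ler_powR; [exact: ltW | by rewrite nnegrE | by rewrite nnegrE | exact: ltW].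
  have mk := @markov0 _ _ _ P (fun w => enorm (eps w) `^ q) Bt (t0 `^ q)
    (powR_ge0 _ _) mBt (measurableT_comp (measurable_powR q) mne)
    (fun w => powR_ge0 _ _) hB.
  have I0 : (0 <= \int[P]_w (enorm (eps w) `^ q)%:E)%E.
    by apply: integral_ge0 => w _; rewrite lee_fin powR_ge0.
  have hI := @pow_inv_le _ _ q M q0 (ltW M0) I0 A5.
  have := le_trans mk hI.
  have PBf : P Bt = (fine (P Bt))%:E by rewrite fineK // fin_num_measure.
  have -> : t0 `^ q = (1 - p)^-1 * M `^ q.
    rewrite /t0 powRM ?powR_ge0 ?ltW // -powRrM mulNr mulVf ?gt_eqF //.
    by rewrite powR_inv1 // subr_ge0 ltW.
  rewrite PBf -EFinM lee_fin => hk.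
  have Mq0 : 0 < M `^ q by apply: powR_gt0.
  have hpb : fine (P Bt) <= 1 - p.
    have h1p : 0 < 1 - p by lra.
    have : (1 - p)^-1 * fine (P Bt) <= 1.
      by rewrite -(ler_pM2l Mq0) mulr1 mulrA (mulrC (M `^ q)).
    by rewrite ler_pdivrMl // mulr1.
  have -> : [set w | (enorm (eps w) <= t0)%R] = ~` Bt.
    by apply/seteqP; split => w /=; rewrite leNgt => /negP.
  rewrite probability_setC // PBf -EFinB lee_fin; lra.
have Qe_le : quantile P (fun w => enorm (eps w)) p <= t0 by exact: quantile_le.
have wit : (p%:E <= P [set w | (enorm (G w) <= enorm g + t0)%R])%E.
  apply: (le_trans Pt0); rewrite le_measure ?inE //; try exact: meas_le.
  by move=> w /= h; rewrite (le_trans (tri w)) // lerD2l.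
have tau0 : 0 <= tau by exact: quantile_ge0 wit.
have Ptau : (p%:E <= P [set w | (enorm (G w) <= tau)%R])%E.
  exact: quantile_attained wit.
have claim2 : tau <= enorm g + quantile P (fun w => enorm (eps w)) p.
  suff : tau - enorm g <= quantile P (fun w => enorm (eps w)) p by lra.
  rewrite /quantile; apply: lb_le_inf; first by exists t0.
  move=> s /= hs.
  suff : tau <= enorm g + s by lra.
  apply: quantile_le => //.
  apply: (le_trans hs); rewrite le_measure ?inE //; try exact: meas_le.
  by move=> w /= h; rewrite (le_trans (tri w)) // lerD2l.
have claim3 : enorm g + quantile P (fun w => enorm (eps w)) p
        <= enorm g + (1 - p) `^ (- q^-1) * M by rewrite lerD2l.
have a0 : forall w, 0 <= alpha w by move=> w; exact: clipfac_ge0.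
have a1 : forall w, alpha w <= 1 by move=> w; exact: clipfac_le1.
have malpha : measurable_fun setT alpha.
  have -> : alpha = (fun w => if enorm (G w) <= tau then 1 else tau * enorm (G w) `^ (-1)).
    apply: funext => w; rewrite /alpha /clipfac; case: ifP => // _.
    by rewrite powR_inv1.
  apply: measurable_fun_ifT.
  - by apply: measurable_fun_ler => //; exact: measurable_cst.
  - exact: measurable_cst.
  - apply: measurable_funM; first exact: measurable_cst.
    exact: (measurableT_comp (measurable_powR _) mnG).
have ieI : forall i, P.-integrable setT (EFin \o (fun w => eps w ord0 i)).
  by move=> i; case: (ie i).
have vE : forall (X : T -> 'rV[R]_d) i,
    vexpect P X ord0 i = Rintegral P setT (fun w => X w ord0 i).
  by move=> X i; rewrite /vexpect mxE.
have intA : P.-integrable setT (EFin \o alpha).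
  by apply: (@bdd_integrable _ _ _ P _ 1) => // w; rewrite ger0_norm.
set Bs := [set w | (tau < enorm (G w))%R].
have mBs : measurable Bs by exact: meas_lt.
have PB : (P Bs <= (1 - p)%:E)%E.
  have -> : Bs = ~` [set w | (enorm (G w) <= tau)%R].
    apply/seteqP; split => w; rewrite /Bs /=; first by move=> h1 h2; move: h1; rewrite ltNge h2.
    by move=> h; rewrite ltNge; apply/negP.
  by apply: compl_le => //; exact: meas_le.
have p01 : 0 < p < 1 by rewrite p0 p1.
have [intB hleB] := @holder_B _ _ _ P _ Bs q p M mne ne0 mBs q1 p01 (ltW M0) PB A5.
set K := Rintegral P setT (fun w => \1_Bs w * enorm (eps w)).
have hK : K <= (1 - p) `^ (1 - q^-1) * M.
  rewrite -lee_fin /K /Rintegral fineK //; exact: integrable_fin_num.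
have K0 : 0 <= K.
  by apply: Rintegral_ge0 => w _; rewrite mulr_ge0 // indicE; case: (w \in Bs).
have intae : forall i, P.-integrable setT (EFin \o (fun w => (alpha w - 1) * eps w ord0 i)).
  move=> i; apply: (@dom_integrable _ _ _ P _ (fun w => eps w ord0 i)) => //.
  - by apply: measurable_funM => //; apply: measurable_funB => //; exact: measurable_cst.
  - move=> w; rewrite normrM ler_piMl // ler_norml; have := a0 w; have := a1 w; lra.
set v := vexpect P (fun w => alpha w *: G w) - alphabar *: g.
have vi : forall i, v ord0 i = Rintegral P setT (fun w => (alpha w - 1) * eps w ord0 i).
  move=> i; rewrite /v !mxE.
  change (fine _) with (Rintegral P setT (fun w => (alpha w *: G w) ord0 i)).
  have intaei : P.-integrable setT (EFin \o (fun w => alpha w * eps w ord0 i)).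
    apply: (@dom_integrable _ _ _ P _ (fun w => eps w ord0 i)) => //.
    - exact: measurable_funM.
    - move=> w; rewrite normrM ler_piMl // ger0_norm //.
  have intag : P.-integrable setT (EFin \o (fun w => alpha w * g ord0 i)).
    apply: (@bdd_integrable _ _ _ P _ `|g ord0 i|).
    - by apply: measurable_funM => //; exact: measurable_cst.
    - by move=> w; rewrite normrM ler_piMl // ger0_norm.
  rewrite (@eq_Rintegral _ _ _ P setT (fun w => alpha w * g ord0 i + alpha w * eps w ord0 i));
    last by move=> w _; rewrite !mxE mulrDr.
  rewrite RintegralD // RintegralZr //.
  rewrite (@eq_Rintegral _ _ _ P setT (fun w => alpha w * eps w ord0 i - eps w ord0 i)
    (fun w => (alpha w - 1) * eps w ord0 i));
    last by move=> w _; rewrite mulrBl mul1r.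
  rewrite RintegralB //.
  have -> : Rintegral P setT (fun w => eps w ord0 i) = 0.
    by rewrite /Rintegral; case: (ie i) => _ ->.
  rewrite /alphabar -/(Rintegral P setT alpha); lra.
have sqv : sqn v <= enorm v * K.
  have e1 : sqn v = \sum_(i < d)
      Rintegral P setT (fun w => v ord0 i * ((alpha w - 1) * eps w ord0 i)).
    by rewrite /sqn; apply: eq_bigr => i _; rewrite RintegralZl // -vi expr2.
  rewrite e1 -Rintegral_sumI; last by move=> i; apply: intZ.
  rewrite /K -RintegralZl //.
  apply: le_Rintegral => //.
  - by apply: int_sum => i; exact: intZ.
  - exact: intZ.
  move=> w _.
  have -> : \sum_(i < d) v ord0 i * ((alpha w - 1) * eps w ord0 i)
      = (1 - alpha w) * dotv (- v) (eps w).
    by rewrite /dotv mulr_sumr; apply: eq_bigr => i _; rewrite [in RHS]mxE; ring.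
  have hcs := @CS _ _ (- v) (eps w); rewrite enorm_opp in hcs.
  have ha := a0 w; have hb := a1 w.
  have hX : 0 <= enorm v * enorm (eps w) by rewrite mulr_ge0 // enorm_ge0.
  rewrite indicE; case: (boolP (w \in Bs)) => hw /=.
  + rewrite mul1r; apply: le_trans (ler_wpM2l _ hcs) _; first lra.
    by rewrite ler_piMl //; lra.
  + have hn : ~~ (tau < enorm (G w)).
      by apply/negP => h; move/negP: hw; apply; apply: mem_set.
    have -> : alpha w = 1 by rewrite /alpha /clipfac ifT // leNgt.
    by rewrite subrr !mul0r mulr0.
have claim1 : enorm v <= (1 - p) `^ (1 - q^-1) * M.
  apply: le_trans hK.
  have [v0|vpos] := eqVneq (enorm v) 0; first by rewrite v0.
  have vp : 0 < enorm v by rewrite lt0r vpos enorm_ge0.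
  by move: sqv; rewrite -enorm_sq expr2 ler_pM2l.
have claim4 : 2 <= q ->
    (\int[P]_w ((enorm (alpha w *: G w
                       - vexpect P (fun w => alpha w *: G w))) ^+ 2)%:E
          <= (M ^+ 2 + 5 * (1 - p) * tau ^+ 2)%:E)%E.
  move=> q2.
  set X := fun w => alpha w *: G w.
  set m := vexpect P X.
  set c := clipfac tau (enorm g) *: g.
  have mXi : forall i, measurable_fun setT (fun w => X w ord0 i).
    move=> i; have -> : (fun w => X w ord0 i) = (fun w => alpha w * G w ord0 i).
      by apply: funext => w; rewrite /X mxE.
    exact: measurable_funM.
  have bX : forall w i, `|X w ord0 i| <= tau.
    move=> w i; apply: le_trans (coord_le_enorm _ _ (X w) i) _; exact: clip_enorm.
  have mXa : forall a : 'rV[R]_d, measurable_fun setT (fun w => enorm (X w - a) ^+ 2).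
    move=> a; apply: measurable_funX; apply: meas_enorm => i.
    have -> : (fun w => (X w - a) ord0 i) = (fun w => X w ord0 i - a ord0 i).
      by apply: funext => w; rewrite mxBE.
    by apply: measurable_funB => //; exact: measurable_cst.
  have intXa : forall a : 'rV[R]_d, P.-integrable setT (EFin \o (fun w => enorm (X w - a) ^+ 2)).
    move=> a; apply: (@bdd_integrable _ _ _ P _ ((tau + enorm a) ^+ 2)) => // w.
    rewrite ger0_norm ?sqr_ge0 //; apply: lerXn2r.
    - by rewrite nnegrE enorm_ge0.
    - by rewrite nnegrE addr_ge0 // enorm_ge0.
    - apply: le_trans (enorm_triangle _ _ _ _) _; rewrite enorm_opp lerD2r.
      exact: clip_enorm.
  have sumE : forall a : 'rV[R]_d, Rintegral P setT (fun w => enorm (X w - a) ^+ 2)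
      = \sum_(i < d) Rintegral P setT (fun w => (X w ord0 i - a ord0 i) ^+ 2).
    move=> a; rewrite -Rintegral_sumI.
      apply: eq_Rintegral => w _; rewrite enorm_sq /sqn; apply: eq_bigr => i _.
      by rewrite mxBE.
    move=> i; apply: (@bdd_integrable _ _ _ P _ ((tau + `|a ord0 i|) ^+ 2)).
      by apply: measurable_funX; apply: measurable_funB => //; exact: measurable_cst.
    move=> w; rewrite normrX; apply: lerXn2r.
    - by rewrite nnegrE.
    - by rewrite nnegrE addr_ge0 // (le_trans (normr_ge0 _) (bX w i)).
    - by rewrite (le_trans (ler_normB _ _)) // lerD2r.
  have -> : (\int[P]_w ((enorm (X w - m)) ^+ 2)%:E)%E
      = (Rintegral P setT (fun w => enorm (X w - m) ^+ 2))%:E.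
    by rewrite fineK //; apply: integrable_fin_num => //; exact: intXa.
  rewrite lee_fin.
  have step1 : Rintegral P setT (fun w => enorm (X w - m) ^+ 2)
      <= Rintegral P setT (fun w => enorm (X w - c) ^+ 2).
    rewrite !sumE; apply: ler_sum => i _.
    rewrite /m vE; exact: (@var_le _ _ _ P _ tau (c ord0 i) (mXi i) (fun w => bX w i)).
  have step2 : ((Rintegral P setT (fun w => enorm (X w - c) ^+ 2))%:E
      <= \int[P]_w ((enorm (eps w)) ^+ 2)%:E)%E.
    rewrite /Rintegral fineK; last by apply: integrable_fin_num => //; exact: intXa.
    apply: ge0_le_integral => //.
    - by move=> w _; rewrite lee_fin sqr_ge0.
    - by apply/measurable_EFinP; exact: mXa.
    - by apply/measurable_EFinP; exact: measurable_funX.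
    move=> w _; rewrite lee_fin !enorm_sq.
    have -> : eps w = G w - g by rewrite /G (addrC g) addrK.
    exact: clip_lip.
  have step3 := @sq_moment _ _ _ P _ q M mne ne0 q2 (ltW M0) A5.
  have h23 := le_trans step2 step3; rewrite lee_fin in h23.
  have h5 : 0 <= 5 * (1 - p) * tau ^+ 2 by rewrite mulr_ge0 ?sqr_ge0 // mulr_ge0 //; lra.
  lra.
by split.
Qed.
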